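(* Let $T$ be a hypercyclic bounded operator on a separable Banach space $X$ with $c(T)>0$. Then there is a comeager set of vectors $x\in X$ such that $\|T^ix\|\to0$ as $i\to\infty$ along some set $D_x\subset\mathbb N$ with $\overline{\mathrm{dens}}(D_x)\ge c(T)$.
   Context: $HC(T)$ is the set of vectors with dense $T$-orbit. $\mathcal N_T(x,B)=\{i\in\mathbb N:T^ix\in B\}$; $\overline{\mathrm{dens}}(D)=\limsup_N\frac1N\#(D\cap[1,N])$; $B_R$ is the closed ball of radius $R$ centred at $0$. $c(T)=\sup_{R>0}\sup_{x\in HC(T)}\overline{\mathrm{dens}}\,\mathcal N_T(x,B_R)$. *)

(* Defs.v *)
From Stdlib Require Import Reals Lra ClassicalEpsilon.
Open Scope R_scope.

(** Real normed vector spaces (complex spaces are covered by restriction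
    of scalars). *)
Record NormedSpace := mkNormedSpace {
  carrier :> Type;
  vzero : carrier;
  vadd : carrier -> carrier -> carrier;
  vopp : carrier -> carrier;
  vscal : R -> carrier -> carrier;
  vnorm : carrier -> R;
  vadd_assoc : forall x y z, vadd x (vadd y z) = vadd (vadd x y) z;
  vadd_comm : forall x y, vadd x y = vadd y x;
  vadd_0 : forall x, vadd x vzero = x;
  vadd_opp : forall x, vadd x (vopp x) = vzero;
  vscal_1 : forall x, vscal 1 x = x;
  vscal_assoc : forall a b x, vscal a (vscal b x) = vscal (a * b) x;
  vscal_distr_l : forall a x y, vscal a (vadd x y) = vadd (vscal a x) (vscal a y);
  vscal_distr_r : forall a b x, vscal (a + b) x = vadd (vscal a x) (vscal b x);
  vnorm_eq0 : forall x, vnorm x = 0 -> x = vzero;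
  vnorm_scal : forall a x, vnorm (vscal a x) = Rabs a * vnorm x;
  vnorm_triangle : forall x y, vnorm (vadd x y) <= vnorm x + vnorm y
}.

Arguments vzero {_}.
Arguments vadd {_} _ _.
Arguments vopp {_} _.
Arguments vscal {_} _ _.
Arguments vnorm {_} _.

Definition vdist {X : NormedSpace} (x y : X) : R := vnorm (vadd x (vopp y)).

Definition cauchy_seq {X : NormedSpace} (u : nat -> X) : Prop :=
  forall eps, 0 < eps -> exists N, forall m n, (N <= m)%nat -> (N <= n)%nat ->
    vdist (u m) (u n) < eps.

Definition seq_converges {X : NormedSpace} (u : nat -> X) : Prop :=
  exists l : X, forall eps, 0 < eps -> exists N, forall n, (N <= n)%nat ->
    vdist (u n) l < eps.

Definition complete (X : NormedSpace) : Prop :=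
  forall u : nat -> X, cauchy_seq u -> seq_converges u.

Definition separable (X : NormedSpace) : Prop :=
  exists d : nat -> X, forall x eps, 0 < eps -> exists n, vdist x (d n) < eps.

Definition bounded_linear {X : NormedSpace} (T : X -> X) : Prop :=
  (forall x y, T (vadd x y) = vadd (T x) (T y)) /\
  (forall a x, T (vscal a x) = vscal a (T x)) /\
  (exists M, forall x, vnorm (T x) <= M * vnorm x).

Definition iter_op {X : NormedSpace} (T : X -> X) (i : nat) (x : X) : X :=
  Nat.iter i T x.

Definition HC {X : NormedSpace} (T : X -> X) (x : X) : Prop :=
  forall y eps, 0 < eps -> exists i, vdist (iter_op T i x) y < eps.

Definition hypercyclic {X : NormedSpace} (T : X -> X) : Prop :=
  exists x, HC T x.

Fixpoint count_upto (D : nat -> Prop) (N : nat) : nat :=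
  match N with
  | O => O
  | S n => (count_upto D n +
            (if excluded_middle_informative (D (S n)) then 1 else 0))%nat
  end.

(** the ratio #(D ∩ [1,N]) / N, indexed by n = N - 1 (N >= 1) *)
Definition dens_ratio (D : nat -> Prop) (n : nat) : R :=
  INR (count_upto D (S n)) / INR (S n).

Definition is_limsup (u : nat -> R) (l : R) : Prop :=
  (forall eps, 0 < eps -> forall M, exists N, (M <= N)%nat /\ l - eps < u N) /\
  (forall eps, 0 < eps -> exists M, forall N, (M <= N)%nat -> u N < l + eps).

(** upper density: limsup_N #(D ∩ [1,N]) / N (exists and is unique since the
    ratios lie in [0,1]). *)
Definition updens (D : nat -> Prop) : R :=
  epsilon (inhabits 0) (fun l => is_limsup (dens_ratio D) l).

Definition return_set {X : NormedSpace} (T : X -> X) (x : X) (Rad : R) : nat -> Prop :=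
  fun i => vnorm (iter_op T i x) <= Rad.

Definition cT {X : NormedSpace} (T : X -> X) : R :=
  epsilon (inhabits 0)
    (is_lub (fun d => exists Rad x, 0 < Rad /\ HC T x /\
                        d = updens (return_set T x Rad))).

Definition open_set {X : NormedSpace} (U : X -> Prop) : Prop :=
  forall x, U x -> exists r, 0 < r /\ forall y, vdist y x < r -> U y.

Definition dense_set {X : NormedSpace} (U : X -> Prop) : Prop :=
  forall y eps, 0 < eps -> exists x, U x /\ vdist x y < eps.

Definition comeager {X : NormedSpace} (G : X -> Prop) : Prop :=
  exists U : nat -> X -> Prop,
    (forall n, open_set (U n) /\ dense_set (U n)) /\
    (forall x, (forall n, U n x) -> G x).

Definition tends_to_zero_along {X : NormedSpace} (T : X -> X) (x : X)
  (D : nat -> Prop) : Prop :=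
  forall eps, 0 < eps -> exists N, forall i, D i -> (N <= i)%nat ->
    vnorm (iter_op T i x) < eps.

(* Main.v *)
Require Import Defs.
From Stdlib Require Import Reals.
Open Scope R_scope.
From Stdlib Require Import Reals Lra Lia ClassicalEpsilon Classical ZArith.
From Coquelicot Require Lim_seq.
Open Scope R_scope.

Section Alg.
Variable X : NormedSpace.

Lemma vadd_0l (x : X) : vadd vzero x = x.
Proof. rewrite vadd_comm; apply vadd_0. Qed.

Lemma vscal_0 (v : X) : vscal 0 v = vzero.
Proof.
  set (w := vscal 0 v).
  assert (H : w = vadd w w) by (unfold w; rewrite <- vscal_distr_r; f_equal; ring).
  transitivity (vadd (vadd w w) (vopp w)).
  - rewrite <- vadd_assoc, vadd_opp, vadd_0; reflexivity.
  - rewrite <- H. apply vadd_opp.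
Qed.

Lemma vopp_scal (v : X) : vopp v = vscal (-1) v.
Proof.
  assert (H : vadd v (vscal (-1) v) = vzero).
  { rewrite <- (vscal_1 _ v) at 1. rewrite <- vscal_distr_r.
    replace (1 + -1) with 0 by ring. apply vscal_0. }
  rewrite <- (vadd_0 _ (vopp v)). rewrite <- H, vadd_assoc.
  rewrite (vadd_comm _ (vopp v) v), vadd_opp, vadd_0l. reflexivity.
Qed.

Lemma vnorm_zero : vnorm (@vzero X) = 0.
Proof.
  rewrite <- (vscal_0 vzero), vnorm_scal, Rabs_R0; ring.
Qed.

Lemma vnorm_opp (v : X) : vnorm (vopp v) = vnorm v.
Proof.
  rewrite vopp_scal, vnorm_scal. replace (Rabs (-1)) with 1. ring.
  rewrite Rabs_left; lra.
Qed.

Lemma vnorm_ge0 (v : X) : 0 <= vnorm v.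
Proof.
  pose proof (vnorm_triangle _ v (vopp v)) as H.
  rewrite vadd_opp, vnorm_zero, vnorm_opp in H. lra.
Qed.

Lemma vadd_cancel (a b : X) : vadd a (vadd b (vopp a)) = b.
Proof.
  rewrite (vadd_comm _ b), vadd_assoc, vadd_opp, vadd_0l; reflexivity.
Qed.

Lemma norm_le_add_dist (a b : X) : vnorm b <= vnorm a + vdist b a.
Proof.
  unfold vdist. rewrite <- (vadd_cancel a b) at 1. apply vnorm_triangle.
Qed.

Lemma vdist_scal (a : R) (u y : X) : a <> 0 ->
  vdist (vscal a u) y = Rabs a * vdist u (vscal (/ a) y).
Proof.
  intro Ha. unfold vdist. rewrite <- vnorm_scal. f_equal.
  rewrite vscal_distr_l, !vopp_scal, !vscal_assoc.
  f_equal. f_equal. field. auto.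
Qed.

Variable T : X -> X.
Hypothesis HT : bounded_linear T.

Lemma iter_add (i j : nat) (x : X) :
  iter_op T i (iter_op T j x) = iter_op T (i + j) x.
Proof. unfold iter_op. rewrite Nat.iter_add. reflexivity. Qed.

Lemma iter_lin_add i (x y : X) :
  iter_op T i (vadd x y) = vadd (iter_op T i x) (iter_op T i y).
Proof.
  destruct HT as [Ha _]. induction i; simpl; auto.
  unfold iter_op in *. simpl. rewrite IHi. apply Ha.
Qed.

Lemma iter_lin_scal i a (x : X) :
  iter_op T i (vscal a x) = vscal a (iter_op T i x).
Proof.
  destruct HT as [_ [Hs _]]. induction i; simpl; auto.
  unfold iter_op in *. simpl. rewrite IHi. apply Hs.
Qed.

Lemma iter_opp i (x : X) : iter_op T i (vopp x) = vopp (iter_op T i x).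
Proof. rewrite !vopp_scal. apply iter_lin_scal. Qed.

Lemma bound_K : exists K, 1 <= K /\ forall i (x : X),
  vnorm (iter_op T i x) <= K ^ i * vnorm x.
Proof.
  destruct HT as [_ [_ [M HM]]]. exists (Rabs M + 1). split.
  { pose proof (Rabs_pos M). lra. }
  intros i x. induction i.
  - simpl. unfold iter_op; simpl. lra.
  - unfold iter_op in *; simpl.
    eapply Rle_trans. apply HM.
    assert (M * vnorm (Nat.iter i T x) <= (Rabs M + 1) * vnorm (Nat.iter i T x)).
    { apply Rmult_le_compat_r. apply vnorm_ge0. pose proof (Rle_abs M). lra. }
    eapply Rle_trans. apply H. rewrite Rmult_assoc.
    apply Rmult_le_compat_l. pose proof (Rabs_pos M); lra. exact IHi.
Qed.

Lemma iter_dist K : (forall i (x : X), vnorm (iter_op T i x) <= K ^ i * vnorm x) ->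
  forall i (x y : X), vdist (iter_op T i y) (iter_op T i x) <= K ^ i * vdist y x.
Proof.
  intros HK i x y. unfold vdist. rewrite <- iter_opp, <- iter_lin_add. apply HK.
Qed.
End Alg.

Lemma count_le (P : nat -> Prop) n : (count_upto P n <= n)%nat.
Proof. induction n; simpl; auto. destruct excluded_middle_informative; lia. Qed.

Lemma count_mono (P Q : nat -> Prop) n :
  (forall i, (1 <= i <= n)%nat -> P i -> Q i) -> (count_upto P n <= count_upto Q n)%nat.
Proof.
  induction n; intro H; simpl; auto.
  assert (count_upto P n <= count_upto Q n)%nat by (apply IHn; intros; apply H; auto; lia).
  destruct (excluded_middle_informative (P (S n))) as [h|h];
  destruct (excluded_middle_informative (Q (S n))) as [h'|h']; try lia.
  exfalso; apply h'; apply H; auto; lia.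
Qed.

Lemma count_shift (P : nat -> Prop) n j :
  (count_upto P (n + j) <= count_upto (fun i => P (i + j)%nat) n + j)%nat.
Proof.
  induction n; simpl. apply count_le.
  destruct (excluded_middle_informative (P (S (n + j)))) as [h|h];
  destruct (excluded_middle_informative (P (S n + j)%nat)) as [h'|h']; try lia;
  exfalso; auto.
Qed.

Lemma count_block (P Q : nat -> Prop) a m :
  (forall i, (a < i <= a + m)%nat -> P i -> Q i) ->
  (count_upto P (a + m) <= count_upto Q (a + m) + a)%nat.
Proof.
  induction m; intro H.
  - rewrite Nat.add_0_r. pose proof (count_le P a); lia.
  - rewrite Nat.add_succ_r. simpl.
    assert (count_upto P (a + m) <= count_upto Q (a + m) + a)%nat
      by (apply IHm; intros; apply H; auto; lia).
    destruct (excluded_middle_informative (P (S (a + m)))) as [h|h];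
    destruct (excluded_middle_informative (Q (S (a + m)))) as [h'|h']; try lia.
    exfalso; apply h'; apply H; auto; lia.
Qed.

Lemma ratio_bounds D n : 0 <= dens_ratio D n <= 1.
Proof.
  unfold dens_ratio. pose proof (count_le D (S n)).
  apply le_INR in H. pose proof (pos_INR (count_upto D (S n))).
  assert (0 < INR (S n)) by (apply lt_0_INR; lia).
  split. apply Rmult_le_pos; auto. left; apply Rinv_0_lt_compat; auto.
  apply (Rmult_le_reg_r (INR (S n))); auto. unfold Rdiv.
  rewrite Rmult_assoc, Rinv_l; lra.
Qed.

Lemma limsup_exists D : exists l, is_limsup (dens_ratio D) l.
Proof.
  destruct (Lim_seq.ex_LimSup_seq (dens_ratio D)) as [l Hl].
  destruct l as [l| |]; simpl in Hl.
  - exists l. split.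
    + intros eps He M. destruct (Hl (mkposreal eps He)) as [H1 _].
      destruct (H1 M) as [N HN]. exists N. exact HN.
    + intros eps He. destruct (Hl (mkposreal eps He)) as [_ H2]. exact H2.
  - destruct (Hl 2 0%nat) as [n [_ Hn]]. pose proof (ratio_bounds D n). lra.
  - destruct (Hl (-1)) as [N HN]. pose proof (HN N (le_n _)).
    pose proof (ratio_bounds D N). lra.
Qed.

Lemma updens_spec D : is_limsup (dens_ratio D) (updens D).
Proof.
  unfold updens. apply epsilon_spec. destruct (limsup_exists D) as [l Hl]; eauto.
Qed.

Lemma updens_le1 D : updens D <= 1.
Proof.
  destruct (updens_spec D) as [H1 _].
  apply Rnot_lt_le; intro Hc.
  destruct (H1 (updens D - 1) ltac:(lra) 0%nat) as [N [_ HN]].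
  pose proof (ratio_bounds D N). lra.
Qed.

Lemma arch_eps eps : 0 < eps -> exists k, / (INR k + 1) < eps.
Proof.
  intro He. destruct (archimed (/ eps)) as [H1 _].
  assert (Hz : (0 <= up (/ eps))%Z).
  { apply le_IZR. pose proof (Rinv_0_lt_compat _ He). simpl; lra. }
  exists (Z.to_nat (up (/eps))).
  rewrite INR_IZR_INZ, Z2Nat.id by auto.
  assert (0 < IZR (up (/eps)) + 1) by (pose proof (Rinv_0_lt_compat _ He); lra).
  set (z := IZR (up (/ eps))) in *.
  rewrite <- (Rinv_inv eps). apply Rinv_lt_contravar.
  - apply Rmult_lt_0_compat. apply Rinv_0_lt_compat; auto. lra.
  - lra.
Qed.

Definition ee (k : nat) : R := / (INR k + 1).

Lemma ee_pos k : 0 < ee k.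
Proof. unfold ee. apply Rinv_0_lt_compat. pose proof (pos_INR k); lra. Qed.

Lemma ee_mul k : ee k * (INR k + 1) = 1.
Proof. unfold ee. field. pose proof (pos_INR k); lra. Qed.

Lemma ee_le1 k : ee k <= 1.
Proof.
  pose proof (ee_mul k). pose proof (ee_pos k). pose proof (pos_INR k). nra.
Qed.

Lemma ee_anti k p : (k <= p)%nat -> ee p <= ee k.
Proof.
  intro H. apply le_INR in H. unfold ee. apply Rinv_le_contravar.
  pose proof (pos_INR k); lra. lra.
Qed.

Lemma ratio_gt D m r : r < dens_ratio D m -> r * INR (S m) < INR (count_upto D (S m)).
Proof.
  unfold dens_ratio. intro H. assert (0 < INR (S m)) by (apply lt_0_INR; lia).
  apply (Rmult_lt_compat_r (INR (S m))) in H; auto.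
  unfold Rdiv in H. rewrite Rmult_assoc, Rinv_l in H; lra.
Qed.

Lemma ratio_ge D m r : r * INR (S m) <= INR (count_upto D (S m)) -> r <= dens_ratio D m.
Proof.
  unfold dens_ratio. intro H. assert (0 < INR (S m)) by (apply lt_0_INR; lia).
  apply (Rmult_le_reg_r (INR (S m))); auto.
  unfold Rdiv. rewrite Rmult_assoc, Rinv_l; lra.
Qed.

Section Main.
Variable X : NormedSpace.
Variable T : X -> X.
Hypothesis HT : bounded_linear T.
Hypothesis Hhc : hypercyclic T.

Definition Sset : R -> Prop := fun d => exists Rad x, 0 < Rad /\ HC T x /\
                        d = updens (return_set T x Rad).

Lemma cT_lub : is_lub Sset (cT T).
Proof.
  unfold cT. apply epsilon_spec.
  destruct (completeness Sset) as [m Hm].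
  - exists 1. intros d [Rad [x [_ [_ ->]]]]. apply updens_le1.
  - destruct Hhc as [x Hx]. exists (updens (return_set T x 1)). exists 1, x.
    split; auto; lra.
  - exists m; exact Hm.
Qed.

Lemma lub_approx e : 0 < e -> exists Rad x0, 0 < Rad /\ HC T x0 /\
  cT T - e < updens (return_set T x0 Rad).
Proof.
  intro He. destruct cT_lub as [Hub Hl].
  apply NNPP. intro Hn.
  assert (Hb : is_upper_bound Sset (cT T - e)).
  { intros d [Rad [x [HR [Hx ->]]]]. apply Rnot_lt_le. intro Hlt.
    apply Hn. exists Rad, x. auto. }
  pose proof (Hl _ Hb). lra.
Qed.

Definition Am (k : nat) (x : X) (i : nat) : Prop := vnorm (iter_op T i x) < ee k.

Definition UU (c : R) (k N : nat) (x : X) : Prop :=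
  exists n, (N <= n)%nat /\ (c - ee k) * INR n < INR (count_upto (Am k x) n).

Lemma single k x i : exists r, 0 < r /\ forall y, vdist y x < r -> Am k x i -> Am k y i.
Proof.
  destruct (bound_K X T HT) as [K [HK1 HK]].
  assert (HKi : 0 < K ^ i) by (apply pow_lt; lra).
  destruct (classic (Am k x i)) as [HA|HA].
  - exists ((ee k - vnorm (iter_op T i x)) / K ^ i). split.
    + unfold Am in HA. apply Rdiv_lt_0_compat; lra.
    + intros y Hy _. unfold Am.
      pose proof (norm_le_add_dist X (iter_op T i x) (iter_op T i y)).
      pose proof (iter_dist X T HT K HK i x y).
      apply (Rmult_lt_compat_l (K ^ i)) in Hy; auto.
      unfold Rdiv in Hy. rewrite (Rmult_comm _ (/ K ^ i)), <- Rmult_assoc,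
        Rinv_r, Rmult_1_l in Hy by lra. lra.
  - exists 1. split. lra. intros. contradiction.
Qed.

Lemma multi k x n : exists r, 0 < r /\ forall y, vdist y x < r ->
  forall i, (i <= n)%nat -> Am k x i -> Am k y i.
Proof.
  induction n.
  - destruct (single k x 0) as [r [Hr H]]. exists r. split; auto.
    intros y Hy i Hi. replace i with 0%nat by lia. auto.
  - destruct IHn as [r1 [Hr1 H1]]. destruct (single k x (S n)) as [r2 [Hr2 H2]].
    exists (Rmin r1 r2). split. apply Rmin_pos; auto.
    intros y Hy i Hi. pose proof (Rmin_l r1 r2). pose proof (Rmin_r r1 r2).
    destruct (Nat.eq_dec i (S n)) as [->|Hne].
    + apply H2. lra.
    + apply H1. lra. lia.
Qed.

Lemma openU c k N : Defs.open_set (UU c k N).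
Proof.
  intros x [n [HN Hc]]. destruct (multi k x n) as [r [Hr H]].
  exists r. split; auto. intros y Hy. exists n. split; auto.
  eapply Rlt_le_trans. apply Hc. apply le_INR. apply count_mono.
  intros i Hi. apply H; auto. lia.
Qed.

Lemma denseU k N : 0 < cT T -> Defs.dense_set (UU (cT T) k N).
Proof.
  intros Hc y eps Heps. set (c := cT T) in *. set (e := ee k).
  assert (He : 0 < e) by apply ee_pos.
  assert (He1 : e <= 1) by apply ee_le1.
  assert (Hek : e * (INR k + 1) = 1) by apply ee_mul.
  destruct (lub_approx (e / 2)) as [Rad [x0 [HR [Hx0 Hd]]]]. lra.
  set (d := updens (return_set T x0 Rad)) in *. fold c in Hd.
  set (a := e / (2 * Rad)).
  assert (Ha : 0 < a) by (unfold a; apply Rdiv_lt_0_compat; lra).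
  destruct (Hx0 (vscal (/ a) y) (eps / a)) as [j Hj]. apply Rdiv_lt_0_compat; lra.
  exists (vscal a (iter_op T j x0)). split.
  2:{ rewrite vdist_scal by lra. rewrite Rabs_right by lra.
      apply (Rmult_lt_compat_l a) in Hj; auto.
      replace (a * (eps / a)) with eps in Hj by (field; lra). exact Hj. }
  destruct (updens_spec (return_set T x0 Rad)) as [H1 _].
  fold d in H1.
  destruct (H1 (d - (c - e / 2)) ltac:(lra) (N + j + 3 * (k + 1) * j)%nat) as [m [Hm Hr]].
  apply ratio_gt in Hr.
  exists (S m - j)%nat. split. lia.
  set (n := (S m - j)%nat).
  assert (Hnj : (n + j = S m)%nat) by (unfold n; lia).
  assert (Hc1 : (count_upto (fun i => return_set T x0 Rad (i + j)%nat) n <=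
                 count_upto (Am k (vscal a (iter_op T j x0))) n)%nat).
  { apply count_mono. intros i _ Hi. unfold return_set, Am in *.
    rewrite iter_lin_scal, iter_add, vnorm_scal, Rabs_right by (auto; lra).
    fold e. apply Rle_lt_trans with (a * Rad).
    apply Rmult_le_compat_l; lra.
    unfold a. replace (e / (2 * Rad) * Rad) with (e / 2) by (field; lra). lra. }
  pose proof (count_shift (return_set T x0 Rad) n j) as Hc2.
  rewrite Hnj in Hc2.
  apply le_INR in Hc1. apply le_INR in Hc2. rewrite plus_INR in Hc2.
  assert (Hn3 : (3 * (k + 1) * j <= n)%nat) by (unfold n; lia).
  apply le_INR in Hn3. rewrite !mult_INR, plus_INR in Hn3. simpl in Hn3.
  replace (INR (S m)) with (INR n + INR j) in Hr by (rewrite <- plus_INR; f_equal; lia).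
  pose proof (pos_INR j). pose proof (pos_INR n).
  assert (e * INR n >= 3 * INR j).
  { replace (3 * INR j) with (e * (3 * (INR k + 1) * INR j)) by nra.
    apply Rle_ge, Rmult_le_compat_l; lra. }
  fold e. assert (0 <= c * INR j) by nra. assert (e * INR j <= INR j) by nra.
  nra.
Qed.

End Main.

Section Final.
Variable X : NormedSpace.
Variable T : X -> X.
Hypothesis HT : bounded_linear T.

Lemma final_step : 0 < cT T -> forall x : X, (forall n, UU X T (cT T) n n x) ->
  exists D : nat -> Prop, cT T <= updens D /\ tends_to_zero_along T x D.
Proof.
  intros Hc x Hx. set (c := cT T) in *.
  assert (HU : forall k N, exists n, (N <= n)%nat /\
             (c - ee k) * INR n < INR (count_upto (Am X T k x) n)).
  { intros k N. destruct (Hx (Nat.max k N)) as [n [Hn Hcn]].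
    exists n. split. lia.
    assert (Hep : ee (Nat.max k N) <= ee k) by (apply ee_anti; lia).
    assert (Hcm : (count_upto (Am X T (Nat.max k N) x) n <= count_upto (Am X T k x) n)%nat).
    { apply count_mono. intros i _ Hi. unfold Am in *. lra. }
    apply le_INR in Hcm. pose proof (pos_INR n).
    assert ((c - ee k) * INR n <= (c - ee (Nat.max k N)) * INR n).
    { apply Rmult_le_compat_r; lra. }
    lra. }
  set (g := fun k N => proj1_sig (constructive_indefinite_description _ (HU k N))).
  assert (Hg : forall k N, (N <= g k N)%nat /\
     (c - ee k) * INR (g k N) < INR (count_upto (Am X T k x) (g k N))).
  { intros k N. unfold g. destruct (constructive_indefinite_description _ (HU k N)) as [n Hn].
    simpl. exact Hn. }
  clearbody g.
  set (nn := fix f (k : nat) : nat := match k with O => O | S k' => g k' (S k' * S (f k'))%nat end).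
  assert (Hnn0 : nn 0%nat = 0%nat) by reflexivity.
  assert (HnnS : forall k, nn (S k) = g k (S k * S (nn k))%nat) by reflexivity.
  clearbody nn.
  assert (Hgrow : forall k, (S k * S (nn k) <= nn (S k))%nat).
  { intro k. rewrite HnnS. apply Hg. }
  assert (Hstrict : forall k, (nn k < nn (S k))%nat).
  { intro k. pose proof (Hgrow k). nia. }
  assert (Hmono : forall p q, (p <= q)%nat -> (nn p <= nn q)%nat).
  { intros p q Hpq. induction Hpq. lia. pose proof (Hstrict m). lia. }
  set (D := fun i => exists k, (nn k < i <= nn (S k))%nat /\ Am X T k x i).
  exists D.
  assert (Hcount : forall k, (c - 2 * ee k) * INR (nn (S k)) <= INR (count_upto D (nn (S k)))).
  { intro k.
    pose proof (count_block (Am X T k x) D (nn k) (nn (S k) - nn k)) as Hb.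
    pose proof (Hstrict k).
    replace (nn k + (nn (S k) - nn k))%nat with (nn (S k)) in Hb by lia.
    assert (Hb' : (count_upto (Am X T k x) (nn (S k)) <= count_upto D (nn (S k)) + nn k)%nat).
    { apply Hb. intros i Hi HA. exists k. split; [lia|auto]. }
    apply le_INR in Hb'. rewrite plus_INR in Hb'.
    destruct (Hg k (S k * S (nn k))%nat) as [_ Hg2]. rewrite <- HnnS in Hg2.
    pose proof (Hgrow k) as Hk. apply le_INR in Hk. rewrite mult_INR, !S_INR in Hk.
    pose proof (ee_mul k). pose proof (ee_pos k). pose proof (pos_INR (nn k)).
    assert (Hnk : INR (nn k) <= ee k * INR (nn (S k))).
    { apply Rle_trans with (ee k * ((INR k + 1) * (INR (nn k) + 1))).
      - nra.
      - apply Rmult_le_compat_l; lra. }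
    lra. }
  split.
  - destruct (updens_spec D) as [_ H2]. set (l := updens D) in *.
    apply Rnot_lt_le. intro Hlc.
    set (eps0 := (c - l) / 3).
    assert (He0 : 0 < eps0) by (unfold eps0; lra).
    destruct (H2 eps0 He0) as [M HM].
    destruct (arch_eps (eps0 / 2)) as [k0 Hk0]. lra.
    set (k := Nat.max k0 M).
    assert (Hkk : ee k <= ee k0) by (apply ee_anti; unfold k; lia).
    pose proof (Hgrow k).
    assert (HS : S (nn (S k) - 1) = nn (S k)) by lia.
    pose proof (ratio_ge D (nn (S k) - 1) (c - 2 * ee k)) as Hrg. rewrite HS in Hrg.
    specialize (Hrg (Hcount k)).
    assert (HMk : (M <= k)%nat) by (unfold k; lia).
    assert (HSk : (S k <= nn (S k))%nat) by nia.
    assert (HMn : (M <= nn (S k) - 1)%nat) by lia.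
    specialize (HM _ HMn). unfold eps0 in *. unfold ee in *. lra.
  - intros eps Heps. destruct (arch_eps eps Heps) as [k0 Hk0].
    exists (S (nn k0)). intros i HD Hi. unfold D in HD. destruct HD as [j [[Hlo Hhi] HA]].
    assert (Hjk : (k0 <= j)%nat).
    { destruct (Nat.le_gt_cases k0 j) as [Hl|Hl]; auto. pose proof (Hmono (S j) k0 ltac:(lia)). lia. }
    unfold Am in HA. pose proof (ee_anti _ _ Hjk). unfold ee in *. lra.
Qed.
End Final.

Theorem proposition4 (X : NormedSpace) (T : X -> X)
  (HX : complete X) (Hsep : separable X) (HT : bounded_linear T)
  (Hhc : hypercyclic T) (Hc : 0 < cT T) :
  comeager (fun x : X => exists D : nat -> Prop,
              cT T <= updens D /\ tends_to_zero_along T x D).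
Proof.
  exists (fun n => UU X T (cT T) n n). split.
  - intro n. split. apply openU; auto. apply denseU; auto.
  - apply final_step; auto.
Qed.
Print Assumptions proposition4.
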